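(* For every $n\geqslant 2$, $|\mathcal{AO}_n|=\binom{2n}{n}-\left\lfloor\frac{1}{2}n^2\right\rfloor$.
   Context: Let $\Omega_n=\{1<2<\cdots<n\}$. $\mathcal{I}_n$ denotes the symmetric inverse monoid of all partial injective maps of $\Omega_n$. $\mathcal{AI}_n$ is the set of all $\alpha\in\mathcal{I}_n$ such that $\alpha=\sigma|_{\mathrm{Dom}(\alpha)}$ for some even permutation $\sigma$ of $\Omega_n$. $\mathcal{POI}_n$ is the set of order-preserving elements of $\mathcal{I}_n$, and $\mathcal{AO}_n=\mathcal{AI}_n\cap\mathcal{POI}_n$. *)

(* Defs.v *)
From mathcomp Require Import all_boot all_order all_fingroup.
Set Implicit Arguments. Unset Strict Implicit. Unset Printing Implicit Defensive.

(* Omega_n = {1 < ... < n} is represented by 'I_n = {0 < ... < n-1}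
   (an order-isomorphic relabelling).  A partial map of Omega_n is a
   finite function 'I_n -> option 'I_n; None means "undefined". *)
Definition pmap n := {ffun 'I_n -> option 'I_n}.

Definition dom n (a : pmap n) : {set 'I_n} := [set x | a x != None].

Definition in_I n (a : pmap n) : bool :=
  [forall x, forall y, ((x \in dom a) && (a x == a y)) ==> (x == y)].

Definition in_AI n (a : pmap n) : bool :=
  in_I a &&
  [exists s : 'S_n, ~~ odd_perm s && [forall x in dom a, a x == Some (s x)]].

Definition in_POI n (a : pmap n) : bool :=
  in_I a &&
  [forall x, forall y, forall u, forall v,
     [&& a x == Some u, a y == Some v & (x <= y)%N] ==> (u <= v)%N].

Definition AO n : {set pmap n} := [set a | in_AI a && in_POI a].

(* Main.v *)
Require Import Defs.
From mathcomp Require Import all_boot all_order all_fingroup.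
From mathcomp Require Import zify.
Require Import Defs.
Set Implicit Arguments. Unset Strict Implicit. Unset Printing Implicit Defensive.

Section S.
Variable m : nat.
Local Notation N := m.+1.

Definition im (a : pmap N) : {set 'I_N} := [set y | [exists x, a x == Some y]].

Lemma in_IP (a : pmap N) : in_I a -> forall x y, a x != None -> a x = a y -> x = y.
Proof.
move=> /forallP H x y hx e; have /forallP/(_ y) := H x.
by rewrite inE hx e eqxx /= => /eqP.
Qed.

Lemma in_POIP (a : pmap N) : in_POI a -> forall x y u v,
  a x = Some u -> a y = Some v -> (x <= y)%N -> (u <= v)%N.
Proof.
case/andP=> _ /forallP H x y u v hx hy le.
move: (H x) => /forallP/(_ y)/forallP/(_ u)/forallP/(_ v)/implyP; apply.
by rewrite hx hy le !eqxx.
Qed.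

Lemma in_POI_I (a : pmap N) : in_POI a -> in_I a.
Proof. by case/andP. Qed.

Lemma memdom (a : pmap N) x : (x \in dom a) = (a x != None).
Proof. by rewrite inE. Qed.

Lemma memim (a : pmap N) y : reflect (exists x, a x = Some y) (y \in im a).
Proof.
rewrite inE; apply: (iffP existsP) => [[x /eqP]|[x e]]; exists x => //.
by rewrite e.
Qed.

Lemma card_im (a : pmap N) : in_I a -> #|im a| = #|dom a|.
Proof.
move=> aI.
have -> : im a = [set odflt x (a x) | x in dom a].
  apply/setP => y; apply/memim/imsetP => [[x e]|[x]].
    by exists x; rewrite ?memdom e.
  by rewrite memdom; case e: (a x) => [u|] //= _ ->; exists x.
apply: card_in_imset => x y; rewrite !memdom.
case ex: (a x) => [u|] //; case ey: (a y) => [v|] //= _ _ euv.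
by apply: (in_IP aI); rewrite ?ex ?ey ?euv.
Qed.

Lemma key (a b : pmap N) (x u v : 'I_N) : in_POI a -> in_POI b -> im a = im b ->
  (forall y : 'I_N, (y < x)%N -> a y = b y) -> a x = Some u -> b x = Some v ->
  (u < v)%N -> False.
Proof.
move=> aP bP eim IH ax bx uv.
have : u \in im b by rewrite -eim; apply/memim; exists x.
case/memim=> y by_.
case: (ltnP y x) => [yx|xy].
  have e : a y = a x by rewrite IH // by_ ax.
  have := in_IP (in_POI_I aP) (y:=x) (x:=y); rewrite e ax => /(_ isT erefl) eyx.
  by move: yx; rewrite eyx ltnn.
have := in_POIP bP bx by_ xy; by rewrite leqNgt uv.
Qed.

Lemma uniqP (a b : pmap N) : in_POI a -> in_POI b -> dom a = dom b -> im a = im b ->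
  a = b.
Proof.
move=> aP bP ed ei; apply/ffunP => x.
have H : forall k (x : 'I_N), val x = k -> a x = b x.
  elim/ltn_ind => k IH y ey.
  have IH1 : forall z : 'I_N, (z < y)%N -> a z = b z.
    by move=> z zy; apply: (IH z) => //; rewrite -ey.
  case ay: (a y) => [u|]; case by_: (b y) => [v|].
  - case: (ltngtP u v) => [uv|vu|/val_inj -> //].
      by case: (key aP bP ei IH1 ay by_ uv).
    by case: (key bP aP (esym ei) (fun z h => esym (IH1 z h)) by_ ay vu).
  - by move: (memdom a y); rewrite ed memdom ay by_.
  - by move: (memdom a y); rewrite ed memdom ay by_.
  - done.
exact: (H x).
Qed.


Definition cf (A B : {set 'I_N}) (x : 'I_N) : 'I_N := nth ord0 (enum B) (index x (enum A)).

Lemma sorted_enum (A : {set 'I_N}) : sorted (fun a b : 'I_N => (a < b)%N) (enum A).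
Proof.
rewrite /enum_mem -enumT; apply: sorted_filter.
  by move=> a b c; apply: ltn_trans.
by rewrite -(sorted_map (f:=val) (e':=ltn)) val_enum_ord iota_ltn_sorted.
Qed.

Section CF.
Variables A B : {set 'I_N}.
Hypothesis eAB : #|A| = #|B|.

Lemma cf_idx x : x \in A -> (index x (enum A) < size (enum B))%N.
Proof. by move=> xA; rewrite -cardE -eAB cardE index_mem mem_enum. Qed.

Lemma cf_mem x : x \in A -> cf A B x \in B.
Proof. by move=> xA; rewrite -mem_enum /cf mem_nth // cf_idx. Qed.

Lemma cf_inj : {in A &, injective (cf A B)}.
Proof.
move=> x y xA yA /eqP; rewrite /cf nth_uniq ?enum_uniq ?cf_idx // => /eqP e.
by rewrite -(nth_index ord0 (s:=enum A) (x:=x)) ?mem_enum // e nth_index ?mem_enum.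
Qed.

Lemma cf_surj y : y \in B -> exists2 x, x \in A & cf A B x = y.
Proof.
move=> yB; have iy : (index y (enum B) < size (enum A))%N.
  by rewrite -cardE eAB cardE index_mem mem_enum.
exists (nth ord0 (enum A) (index y (enum B))); first by rewrite -mem_enum mem_nth.
by rewrite /cf index_uniq ?enum_uniq // nth_index ?mem_enum.
Qed.

Lemma cf_mono x y : x \in A -> y \in A -> (x <= y)%N -> (cf A B x <= cf A B y)%N.
Proof.
move=> xA yA le.
have ile : (index x (enum A) <= index y (enum A))%N.
  rewrite leqNgt; apply/negP => lt.
  have tr : transitive (fun a b : 'I_N => (a < b)%N) by move=> a b c; apply: ltn_trans.
  have := sorted_ltn_index tr (sorted_enum A) y x; rewrite !mem_enum => /(_ yA xA lt).
  by rewrite ltnNge le.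
have sB : sorted (fun a b : 'I_N => (a <= b)%N) (enum B).
  by apply: sub_sorted (sorted_enum B) => a b /ltnW.
have tr : transitive (fun a b : 'I_N => (a <= b)%N) by move=> a b c; apply: leq_trans.
have rf : reflexive (fun a b : 'I_N => (a <= b)%N) by move=> a; apply: leqnn.
apply: (sorted_leq_nth tr rf ord0 sB) => //; exact: cf_idx.
Qed.

Definition pm : pmap N := [ffun x => if x \in A then Some (cf A B x) else None].

Lemma pm_dom : dom pm = A.
Proof. by apply/setP => x; rewrite memdom ffunE; case: (x \in A). Qed.

Lemma pm_im : im pm = B.
Proof.
apply/setP => y; apply/memim/idP => [[x]|yB].
  by rewrite ffunE; case: ifP => // xA [<-]; apply: cf_mem.
by case: (cf_surj yB) => x xA <-; exists x; rewrite ffunE xA.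
Qed.

Lemma pm_I : in_I pm.
Proof.
apply/forallP => x; apply/forallP => y; apply/implyP; rewrite memdom !ffunE.
case xA: (x \in A) => //=; case yA: (y \in A) => //= /eqP [e].
by rewrite (cf_inj xA yA e).
Qed.

Lemma pm_POI : in_POI pm.
Proof.
rewrite /in_POI pm_I /=; apply/forallP => x; apply/forallP => y.
apply/forallP => u; apply/forallP => v; apply/implyP; rewrite !ffunE.
case xA: (x \in A); case yA: (y \in A); rewrite //= ?andbF //.
case/and3P => /eqP [<-] /eqP [<-] le.
exact: cf_mono.
Qed.

End CF.


Definition Q := [set p : {set 'I_N} * {set 'I_N} | #|p.1| == #|p.2|].

Lemma card_Q : #|Q| = 'C(N.*2, N).
Proof.
have -> : #|Q| = \sum_(A : {set 'I_N}) #|[set B : {set 'I_N} | #|B| == #|A|]|.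
  transitivity (\sum_(A : {set 'I_N}) \sum_(B : {set 'I_N} | #|B| == #|A|) 1).
    rewrite pair_big_dep /= -sum1_card; apply: eq_bigl => [[A B]] /=.
    by rewrite !inE eq_sym.
  by apply: eq_bigr => A _; rewrite sum1_card cardsE.
under eq_bigr => A _ do rewrite card_draws card_ord.
rewrite (partition_big (fun A : {set 'I_N} => (inord #|A| : 'I_N.+1)) predT) ?inE //.
rewrite -addnn -Vandermonde; apply: eq_bigr => k _.
rewrite bin_sub; last by rewrite -ltnS.
have cA : forall A : {set 'I_N}, (#|A| < N.+1)%N.
  by move=> A; rewrite ltnS; have := max_card (mem A); rewrite card_ord.
have -> : \sum_(A : {set 'I_N} | true && (inord #|A| == k)) 'C(N, #|A|) =
          \sum_(A : {set 'I_N} | #|A| == k) 'C(N, k).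
  apply: eq_big => A; first by rewrite /= -val_eqE /= inordK.
  by rewrite /= -val_eqE /= inordK // => /eqP ->.
rewrite sum_nat_const.
have E := card_draws 'I_N k; rewrite cardsE card_ord in E.
by rewrite E.
Qed.


Lemma POI_pm (a : pmap N) : in_POI a -> a = pm (dom a) (im a).
Proof.
move=> aP; have e : #|dom a| = #|im a| by rewrite card_im ?in_POI_I.
apply: uniqP => //; first exact: pm_POI.
  by rewrite pm_dom.
by rewrite pm_im.
Qed.

Lemma card_P : #|[set a : pmap N | in_POI a]| = 'C(N.*2, N).
Proof.
have -> : [set a : pmap N | in_POI a] = [set pm p.1 p.2 | p in Q].
  apply/setP => a; rewrite inE; apply/idP/imsetP.
    move=> aP; exists (dom a, im a); last exact: POI_pm.
    by rewrite inE card_im ?in_POI_I.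
  by case=> [[A B]]; rewrite inE => /eqP e ->; apply: pm_POI.
rewrite card_in_imset ?card_Q //.
move=> [A B] [C D]; rewrite !inE /= => /eqP e1 /eqP e2 E.
have := congr1 (fun a => dom a) E; rewrite !pm_dom => ->.
by have := congr1 (fun a => im a) E; rewrite (pm_im e1) (pm_im e2) => ->.
Qed.

End S.


Lemma inner (i n : nat) : \sum_(j < n) odd (i + j) = if odd i then n - n./2 else n./2.
Proof.
elim: n => [|n IH]; first by rewrite big_ord0; case: ifP.
rewrite big_ord_recr /= IH oddD.
case: (odd i); case E: (odd n); simpl; lia.
Qed.
Lemma outer (k n : nat) : \sum_(i < k) (if odd i then n - n./2 else n./2) =
   k./2 * (n - n./2) + (k - k./2) * n./2.
Proof.
elim: k => [|k IH]; first by rewrite big_ord0.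
have -> : \sum_(i < k.+1) (if odd i then n - n./2 else n./2) =
  \sum_(i < k) (if odd i then n - n./2 else n./2) + (if odd k then n - n./2 else n./2).
  by rewrite big_ord_recr.
rewrite IH.
set A := n - n./2; set B := n./2.
case E: (odd k).
- have h1 : (k.+1)./2 = k./2 + 1 by lia.
  have h2 : k.+1 - (k./2 + 1) = k - k./2 by lia.
  rewrite h1 h2 mulnDl mul1n; lia.
- have h1 : (k.+1)./2 = k./2 by lia.
  have h2 : k.+1 - k./2 = k - k./2 + 1 by lia.
  rewrite h1 h2 [(_ + 1) * B]mulnDl mul1n; lia.
Qed.
Lemma fin (n : nat) : n./2 * (n - n./2) + (n - n./2) * n./2 = (n ^ 2)./2.
Proof.
have [t ht] : exists t, t = n./2 by eauto.
rewrite -ht; case/boolP: (odd n) => o.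
- have hn : n = (2 * t).+1 by lia.
  clear ht o; subst n.
  have -> : (2 * t).+1 ^ 2 = 4 * (t * t) + 4 * t + 1.
    by rewrite expnS expn1 mulSn mulnS; rewrite !mulnA [2 * t * 2]mulnAC; lia.
  have -> : ((2 * t).+1 - t) = t + 1 by lia.
  rewrite mulnDr mulnDl; set X := t * t; rewrite [t * 1]muln1 [1 * t]mul1n; lia.
- have hn : n = 2 * t by lia.
  clear ht o; subst n.
  have -> : (2 * t) ^ 2 = 4 * (t * t).
    by rewrite expnS expn1 !mulnA [2 * t * 2]mulnAC.
  have -> : (2 * t - t) = t by lia.
  set X := t * t; lia.
Qed.

Section S2.
Variable m : nat.
Local Notation N := m.+1.

Fixpoint sigu (i d : nat) : {perm 'I_N} :=
  match d with
  | 0 => 1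
  | d'.+1 => sigu i d' * tperm (inord (i + d')) (inord (i + d'.+1))
  end.

Lemma sigu_val i d (x : 'I_N) : (i + d < N)%N ->
  nat_of_ord (sigu i d x) = if (x : nat) == i then i + d else if (i < x <= i + d)%N then ((x : nat)).-1 else (x : nat).
Proof.
elim: d x => [|d IH] x h /=.
  rewrite perm1 addn0; case: eqP => [->//|ne]; case: ifP => //; lia.
have h' : (i + d < N)%N by lia.
rewrite permM; have := IH x h'.
move: (sigu i d x) => y hy.
have va : nat_of_ord (inord (i + d) : 'I_N) = i + d by rewrite /= inordK.
have vb : nat_of_ord (inord (i + d.+1) : 'I_N) = i + d.+1 by rewrite /= inordK.
case: tpermP => [ya|yb|na nb].
- rewrite vb; have := congr1 (@nat_of_ord N) ya; rewrite va => vy.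
  move: hy; rewrite vy.
  case: ((x : nat) =P i) => ex; last case c1: (i < x <= i + d)%N; case c2: (i < x <= i + d.+1)%N; lia.
- rewrite va; have := congr1 (@nat_of_ord N) yb; rewrite vb => vy.
  move: hy; rewrite vy.
  case: ((x : nat) =P i) => ex; last case c1: (i < x <= i + d)%N; case c2: (i < x <= i + d.+1)%N; lia.
- have na' : (y : nat) <> i + d by move=> e; apply: na; apply: val_inj; rewrite /= va e.
  have nb' : (y : nat) <> i + d.+1 by move=> e; apply: nb; apply: val_inj; rewrite /= vb e.
  move: hy.
  case: ((x : nat) =P i) => ex; last case c1: (i < x <= i + d)%N; case c2: (i < x <= i + d.+1)%N; lia.
Qed.


Lemma sigu_odd i d : (i + d < N)%N -> odd_perm (sigu i d) = odd d.
Proof.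
elim: d => [|d IH] h /=; first by rewrite odd_perm1.
rewrite odd_permM IH; last lia.
rewrite odd_tperm -val_eqE /= !inordK; try lia.
Qed.

Definition mono_off (s : {perm 'I_N}) (i : 'I_N) :=
  forall x y : 'I_N, x != i -> y != i -> (x <= y)%N -> (s x <= s y)%N.

Lemma sigu_props (i j : 'I_N) : (i <= j)%N ->
  [/\ sigu i (j - i) i = j, mono_off (sigu i (j - i)) i & odd_perm (sigu i (j - i)) = odd (i + j)].
Proof.
move=> ij; have h : (i + (j - i) < N)%N by have := ltn_ord j; lia.
split.
- by apply: val_inj; rewrite /= sigu_val // eqxx; lia.
- move=> x y xi yi xy; rewrite !sigu_val //.
  move: xi yi; rewrite -!val_eqE /= => /negbTE -> /negbTE ->.
  case: ifP; case: ifP; lia.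
- rewrite sigu_odd //; have e : j = (j - i) + i :> nat by lia.
  by rewrite {2}e !oddD; case: (odd i); case: (odd (j - i)).
Qed.

Lemma inv_props (s : {perm 'I_N}) (i j : 'I_N) : s j = i -> mono_off s j ->
  (s^-1)%g i = j /\ mono_off (s^-1)%g i.
Proof.
move=> sj ms; split; first by rewrite -sj permK.
move=> x y xi yi xy; rewrite leqNgt; apply/negP => lt.
have pj : (s^-1)%g y != j by apply: contra yi => /eqP e; rewrite -sj -e permKV.
have qj : (s^-1)%g x != j by apply: contra xi => /eqP e; rewrite -sj -e permKV.
have := ms _ _ pj qj (ltnW lt); rewrite !permKV => yx.
have exy : x = y by apply: val_inj; apply/eqP; rewrite eqn_leq xy yx.
by move: lt; rewrite exy ltnn.
Qed.

Definition sig (i j : 'I_N) : {perm 'I_N} :=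
  if (i <= j)%N then sigu i (j - i) else ((sigu j (i - j))^-1)%g.

Lemma sig_props (i j : 'I_N) :
  [/\ sig i j i = j, mono_off (sig i j) i & odd_perm (sig i j) = odd (i + j)].
Proof.
rewrite /sig; case: ifP => ij; first exact: sigu_props.
have ji : (j <= i)%N by lia.
case: (sigu_props ji) => a b c.
case: (inv_props a b) => a' b'; split => //.
by rewrite odd_permV c addnC.
Qed.


Definition g (i j : 'I_N) : pmap N :=
  [ffun x => if x == i then None else Some (sig i j x)].

Lemma g_dom i j : dom (g i j) = [set~ i].
Proof. by apply/setP => x; rewrite memdom in_setC1 ffunE; case: (x == i). Qed.

Lemma g_im i j : im (g i j) = [set~ j].
Proof.
case: (sig_props i j) => si _ _.
apply/setP => y; rewrite in_setC1; apply/memim/idP => [[x]|yj].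
  rewrite ffunE; case: eqP => // xi [<-]; apply/eqP => e.
  by apply: xi; apply: (perm_inj (s := sig i j)); rewrite e si.
exists ((sig i j)^-1 y)%g; rewrite ffunE; case: eqP => [e|_].
  have : sig i j ((sig i j)^-1 y)%g = j by rewrite e si.
  by rewrite permKV => yj'; rewrite yj' eqxx in yj.
by rewrite permKV.
Qed.

Lemma g_POI i j : in_POI (g i j).
Proof.
case: (sig_props i j) => si mo _.
apply/andP; split.
  apply/forallP => x; apply/forallP => y; apply/implyP; rewrite memdom !ffunE.
  case: (x =P i) => //= _; case: (y =P i) => //= _ /eqP [] e.
  by rewrite (perm_inj e).
apply/forallP => x; apply/forallP => y; apply/forallP => u; apply/forallP => v.
apply/implyP; rewrite !ffunE.
case: (x =P i) => // /eqP xi; case: (y =P i) => [_|/eqP yi]; rewrite ?andbF //.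
case/and3P => /eqP [<-] /eqP [<-] le; exact: mo.
Qed.

Lemma g_AI i j : in_AI (g i j) = ~~ odd (i + j).
Proof.
case: (sig_props i j) => si mo od.
rewrite /in_AI (in_POI_I (g_POI i j)) /=; apply/existsP/idP.
  case=> s /andP [ev /forallP H].
  have H' : forall x, x != i -> s x = sig i j x.
    move=> x xi; have := H x; rewrite g_dom in_setC1 xi /= ffunE (negbTE xi).
    by move=> /eqP [].
  suff es : s = sig i j by rewrite -od -es.
  apply/permP => x; case: (x =P i) => [->|/eqP xi]; last exact: H'.
  rewrite si; apply/eqP/negP => /negP ne.
  pose y := ((sig i j)^-1 (s i))%g.
  have yi : y != i.
    apply: contra ne => /eqP e; have : sig i j y = s i by rewrite /y permKV.
    by rewrite e si => ->.
  have := H' y yi; rewrite /y permKV => /perm_inj e.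
  by move: yi; rewrite /y e eqxx.
move=> ev; exists (sig i j); rewrite od ev /=.
apply/forallP => x; apply/implyP; rewrite g_dom in_setC1 => xi.
by rewrite ffunE (negbTE xi).
Qed.

Lemma ext (a : pmap N) : in_I a -> exists s : {perm 'I_N},
  forall x, x \in dom a -> a x = Some (s x).
Proof.
move=> aI; set D := dom a; set I := im a.
have hc : #|~: D| = #|~: I|.
  by have := cardsC D; have := cardsC I; rewrite card_im // => <- /eqP; rewrite eqn_add2l => /eqP.
pose f x := if x \in D then odflt x (a x) else cf (~: D) (~: I) x.
have fin : forall x, x \in D -> a x = Some (f x).
  by move=> x xD; rewrite /f xD; move: xD; rewrite memdom; case: (a x).
have fout : forall x, x \notin D -> f x \in ~: I.
  by move=> x xD; rewrite /f (negbTE xD); apply: cf_mem => //; rewrite inE.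
have fI : forall x, x \in D -> f x \in I by move=> x xD; apply/memim; exists x; apply: fin.
have finj : injective f.
  move=> x y e; case xD: (x \in D); case yD: (y \in D).
  - by apply: (in_IP aI); rewrite ?fin // e.
  - by have := fI x xD; have := fout y (negbT yD); rewrite -e inE => /negP.
  - by have := fI y yD; have := fout x (negbT xD); rewrite e inE => /negP.
  - move: e; rewrite /f xD yD; apply: cf_inj => //; rewrite inE ?xD ?yD //.
exists (perm finj) => x xD; by rewrite permE fin.
Qed.


Lemma L1 (a : pmap N) : in_I a -> (#|dom a| + 2 <= N)%N -> in_AI a.
Proof.
move=> aI hk; rewrite /in_AI aI /=.
case: (ext aI) => s hs.
case os: (odd_perm s).
  have : (1 < #|~: dom a|)%N by have := cardsC (dom a); rewrite card_ord; lia.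
  case/card_gt1P => u [v [uD vD uv]].
  apply/existsP; exists (tperm u v * s)%g.
  rewrite odd_mul_tperm uv os /=.
  apply/forallP => x; apply/implyP => xD; rewrite permM tpermD ?hs //.
    by apply/eqP => e; move: uD; rewrite e inE xD.
  by apply/eqP => e; move: vD; rewrite e inE xD.
apply/existsP; exists s; rewrite os /=.
by apply/forallP => x; apply/implyP => xD; rewrite hs.
Qed.

Lemma L2 (a : pmap N) : in_POI a -> #|dom a| = N -> in_AI a.
Proof.
move=> aP hk; have aI := in_POI_I aP.
pose g0 : pmap N := [ffun x => Some x].
have g0P : in_POI g0.
  apply/andP; split.
    apply/forallP => x; apply/forallP => y; apply/implyP; rewrite !ffunE.
    by case/andP => _ /eqP [->].
  apply/forallP => x; apply/forallP => y; apply/forallP => u; apply/forallP => v.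
  by apply/implyP; rewrite !ffunE; case/and3P => /eqP [<-] /eqP [<-].
have dT : forall b : pmap N, #|dom b| = N -> dom b = setT.
  by move=> b hb; apply/eqP; rewrite eqEcard subsetT cardsT card_ord hb ltnSn.
have iT : forall b : pmap N, in_I b -> #|dom b| = N -> im b = setT.
  by move=> b bI hb; apply/eqP; rewrite eqEcard subsetT cardsT card_ord (card_im bI) hb ltnSn.
have dg' : dom g0 = setT by apply/setP => x; rewrite memdom ffunE inE.
have dg : #|dom g0| = N by rewrite dg' cardsT card_ord.
have e : a = g0.
  apply: uniqP => //; first by rewrite (dT a hk) (dT g0 dg).
  by rewrite (iT a aI hk) (iT g0 (in_POI_I g0P) dg).
rewrite /in_AI aI /=; apply/existsP; exists 1%g; rewrite odd_perm1 /=.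
by apply/forallP => x; apply/implyP => _; rewrite e ffunE perm1.
Qed.

Lemma L3 (a : pmap N) i j : in_POI a -> dom a = [set~ i] -> im a = [set~ j] -> a = g i j.
Proof.
move=> aP hd hi; apply: uniqP => //; first exact: g_POI.
  by rewrite g_dom.
by rewrite g_im.
Qed.


Definition Odd := [set p : 'I_N * 'I_N | odd (p.1 + p.2)].

Lemma card_Odd : #|Odd| = (N ^ 2)./2.
Proof.
transitivity (\sum_(i : 'I_N) \sum_(j : 'I_N | odd (i + j)) 1).
  rewrite pair_big_dep /= -sum1_card; apply: eq_bigl => [[i j]] /=.
  by rewrite inE.
transitivity (\sum_(i < N) \sum_(j < N) odd (i + j)).
  apply: eq_bigr => i _; rewrite big_mkcond /=; apply: eq_bigr => j _.
  by case: odd.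
under eq_bigr => i _ do rewrite inner.
by rewrite outer fin.
Qed.

Lemma PD : [set a : pmap N | in_POI a] :\: AO N = [set g p.1 p.2 | p in Odd].
Proof.
apply/setP => a; rewrite /AO !inE; apply/idP/imsetP.
  case/andP => nAO aP; have nAI : ~~ in_AI a by move: nAO; rewrite aP andbT.
  have aI := in_POI_I aP.
  have hk : (#|dom a| <= N)%N by have := max_card (mem (dom a)); rewrite card_ord.
  case: (ltngtP #|dom a| m) => [lt|gt|eq].
  - by move: nAI; rewrite L1 //; lia.
  - by move: nAI; rewrite L2 //; lia.
  - have : #|~: dom a| == 1 by have := cardsC (dom a); rewrite card_ord eq; lia.
    case/cards1P => i ei.
    have : #|~: im a| == 1 by have := cardsC (im a); rewrite card_ord card_im // eq; lia.
    case/cards1P => j ej.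
    have hd : dom a = [set~ i] by rewrite -ei setCK.
    have hi : im a = [set~ j] by rewrite -ej setCK.
    have ea := L3 aP hd hi.
    exists (i, j) => //; rewrite inE /=.
    by move: nAI; rewrite ea g_AI negbK.
case=> [[i j]]; rewrite inE /= => o ->.
by rewrite g_POI g_AI o.
Qed.

Lemma card_PD : #|[set a : pmap N | in_POI a] :\: AO N| = (N ^ 2)./2.
Proof.
rewrite PD card_in_imset ?card_Odd //.
move=> [i j] [i' j'] _ _ /= E.
have := congr1 (fun a => dom a) E; rewrite !g_dom => /setC_inj/set1_inj ->.
by have := congr1 (fun a => im a) E; rewrite !g_im => /setC_inj/set1_inj ->.
Qed.

End S2.

Theorem proposition1p2 (n : nat) : 2 <= n ->
  #|AO n| = 'C(n.*2, n) - (n ^ 2)./2.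
Proof.
case: n => [|m] // hn.
have sub : AO m.+1 \subset [set a : pmap m.+1 | in_POI a].
  by apply/subsetP => a; rewrite /AO !inE => /andP [].
have := cardsD [set a : pmap m.+1 | in_POI a] (AO m.+1).
rewrite (setIidPr sub) card_PD card_P.
have := subset_leq_card sub; rewrite card_P.
by move=> h1 ->; rewrite subKn.
Qed.
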